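(* Let $\mathcal{I}$ be finite and, for $\mathbf{Q}\in B(\mathcal{L})$, let $p^{MU}(\mathbf{Q})=\log|\mathcal{P}_{\mathbf{Q}}|$ (the min-entropy information gain under the uniform distribution on $\mathcal{I}$). Then $p^{MU}$ is an arbitrage-free instance-independent pricing function.
   Context: $\mathcal{I}$ is a set of database instances; queries are deterministic functions on $\mathcal{I}$; a query bundle is a finite tuple of queries from a language $\mathcal{L}$, evaluated componentwise; $B(\mathcal{L})$ is the set of bundles, closed under concatenation $\mathbf{Q}_1,\mathbf{Q}_2$. $\mathcal{P}_{\mathbf{Q}}$ is the partition of $\mathcal{I}$ into the equivalence classes of $D\sim D'\iff\mathbf{Q}(D)=\mathbf{Q}(D')$, and $|\mathcal{P}_{\mathbf{Q}}|$ is its number of blocks. An instance-independent pricing function $p$ is arbitrage-free if (i) whenever for all $D',D''\in\mathcal{I}$, $\mathbf{Q}_2(D')=\mathbf{Q}_2(D'')$ implies $\mathbf{Q}_1(D')=\mathbf{Q}_1(D'')$, we have $p(\mathbf{Q}_2)\ge p(\mathbf{Q}_1)$; and (ii) $p(\mathbf{Q}_1,\mathbf{Q}_2)\le p(\mathbf{Q}_1)+p(\mathbf{Q}_2)$ for all bundles. *)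

(* Defs.v *)
From HB Require Import structures.
From mathcomp Require Import all_boot all_order all_algebra.
From mathcomp Require Import boolp reals exp.
Set Implicit Arguments. Unset Strict Implicit. Unset Printing Implicit Defensive.
Import Order.TTheory GRing.Theory Num.Theory.

(* Instances: a finite type [I].  Queries: functions [I -> Out].
   A query language [L] is a predicate on queries; a bundle is a finite
   tuple (list) of queries from [L], evaluated componentwise. *)

Definition eval_bundle (I : Type) (Out : Type) (Q : seq (I -> Out)) (D : I)
  : seq Out := map (fun q => q D) Q.

Fixpoint is_bundle (I Out : Type) (L : (I -> Out) -> Prop) (Q : seq (I -> Out))
  : Prop := if Q is q :: Q' then L q /\ is_bundle L Q' else True.

Definition partition_of (I : finType) (Out : Type) (Q : seq (I -> Out))
  : {set {set I}} :=
  [set [set D' | `[< eval_bundle Q D' = eval_bundle Q D >]] | D : I].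

Definition nblocks (I : finType) (Out : Type) (Q : seq (I -> Out)) : nat :=
  #|partition_of Q|.

Definition pMU (R : realType) (I : finType) (Out : Type) (Q : seq (I -> Out)) : R :=
  ln ((nblocks Q)%:R).

Definition arbitrage_free (R : realType) (I Out : Type)
  (L : (I -> Out) -> Prop) (p : seq (I -> Out) -> R) : Prop :=
  (forall Q1 Q2, is_bundle L Q1 -> is_bundle L Q2 ->
     (forall D' D'', eval_bundle Q2 D' = eval_bundle Q2 D'' ->
                     eval_bundle Q1 D' = eval_bundle Q1 D'') ->
     (p Q1 <= p Q2)%R) /\
  (forall Q1 Q2, is_bundle L Q1 -> is_bundle L Q2 ->
     (p (Q1 ++ Q2) <= p Q1 + p Q2)%R).

(* Main.v *)
Require Import Defs.
From mathcomp Require Import all_boot all_order all_algebra.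
From mathcomp Require Import boolp reals exp.
Import Order.TTheory GRing.Theory Num.Theory.
Set Implicit Arguments. Unset Strict Implicit.

Lemma card_factor (I A B : finType) (f1 : I -> A) (f2 : I -> B) :
  (forall D D', f2 D = f2 D' -> f1 D = f1 D') ->
  #|[set f1 D | D : I]| <= #|[set f2 D | D : I]|.
Proof.
move=> H.
case: (pickP (fun _ : I => true)) => [D0 _|h0]; last first.
  have -> : [set f1 D | D : I] = set0.
    by apply/setP => x; rewrite in_set0; apply/imsetP => -[D]; move: (h0 D).
  by rewrite cards0.
pose g := fun b : B => f1 (odflt D0 [pick D | f2 D == b]).
have -> : [set f1 D | D : I] = [set g b | b in [set f2 D | D : I]].
  apply/setP => x; apply/imsetP/imsetP.
    move=> [D _ ->]; exists (f2 D); first by apply/imsetP; exists D.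
    rewrite /g; case: pickP => [d /eqP/H -> //|/(_ D)]; by rewrite eqxx.
  move=> [b /imsetP [D _ ->] ->]; exists D => //.
  rewrite /g; case: pickP => [d /eqP/H -> //|/(_ D)]; by rewrite eqxx.
exact: leq_imset_card.
Qed.

Definition blk (I : finType) (Out : Type) (Q : seq (I -> Out)) (D : I) : {set I} :=
  [set D' | `[< eval_bundle Q D' = eval_bundle Q D >]].

Lemma blk_eq (I : finType) (Out : Type) (Q : seq (I -> Out)) (D D' : I) :
  blk Q D = blk Q D' <-> eval_bundle Q D = eval_bundle Q D'.
Proof.
split.
  move=> h; have : D \in blk Q D' by rewrite -h inE; apply/asboolP.
  by rewrite inE => /asboolP.
move=> h; apply/setP => x; rewrite !inE h //.
Qed.

Lemma nblocksE (I : finType) (Out : Type) (Q : seq (I -> Out)) :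
  nblocks Q = #|[set blk Q D | D : I]|.
Proof. by []. Qed.

Lemma nblocks_pos (I : finType) (Out : Type) (Q : seq (I -> Out)) (D : I) :
  0 < nblocks Q.
Proof. rewrite nblocksE card_gt0; apply/set0Pn; exists (blk Q D); exact: imset_f. Qed.

Lemma nblocks_empty (I : finType) (Out : Type) (Q : seq (I -> Out)) :
  (forall D : I, False) -> nblocks Q = 0.
Proof.
move=> h; rewrite nblocksE; apply/eqP; rewrite cards_eq0; apply/eqP/setP => x.
by rewrite in_set0; apply/imsetP => -[D]; case: (h D).
Qed.

Lemma ln_nat_ge0 (R : realType) (n : nat) : (0 <= ln (n%:R : R))%R.
Proof.
case: n => [|n]; first by rewrite ln0.
by apply: ln_ge0; rewrite ler1n.
Qed.

Theorem lemma21 (R : realType) (I : finType) (Out : Type)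
  (L : (I -> Out) -> Prop) :
  arbitrage_free L (@pMU R I Out).
Proof.
rewrite /arbitrage_free /pMU; split.
  move=> Q1 Q2 _ _ H.
  have hle : nblocks Q1 <= nblocks Q2.
    rewrite !nblocksE; apply: card_factor => D D' /blk_eq/H/blk_eq //.
  case: (pickP (fun _ : I => true)) => [D0 _|h0]; last first.
    rewrite (nblocks_empty Q1); last by move=> D; move: (h0 D).
    by rewrite (@ln0 _ (0%:R)) // ln_nat_ge0.
  rewrite ler_ln ?ler_nat // posrE ltr0n; exact: nblocks_pos D0.
move=> Q1 Q2 _ _.
case: (pickP (fun _ : I => true)) => [D0 _|h0]; last first.
  rewrite (nblocks_empty (Q1 ++ Q2)); last by move=> D; move: (h0 D).
  rewrite (@ln0 _ (0%:R)) //.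
  by rewrite addr_ge0 // ln_nat_ge0.
have hle : nblocks (Q1 ++ Q2) <= nblocks Q1 * nblocks Q2.
  rewrite !nblocksE -cardsX.
  apply: (leq_trans (card_factor (f2 := fun D => (blk Q1 D, blk Q2 D)) _)).
    move=> D D' [/blk_eq h1 /blk_eq h2]; apply/blk_eq.
    by rewrite /eval_bundle !map_cat; move: h1 h2; rewrite /eval_bundle => -> ->.
  apply: subset_leq_card; apply/subsetP => x /imsetP [D _ ->].
  by rewrite inE /= imset_f // imset_f.
have p1 := nblocks_pos Q1 D0; have p2 := nblocks_pos Q2 D0.
rewrite -lnM ?posrE ?ltr0n // -natrM.
rewrite ler_ln ?posrE ?ltr0n ?ler_nat //.
  exact: nblocks_pos D0.
by rewrite muln_gt0 p1 p2.
Qed.
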